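(* If $G_1$ and $G_2$ are vertex-disjoint semi-weakly CIS graphs, then their disjoint union $G_1+G_2$ and their join $G_1*G_2$ are also semi-weakly CIS.
   Context: A strong clique of a graph is a clique meeting every maximal stable set. A graph is semi-weakly CIS if it admits a family of strong cliques such that every two adjacent vertices lie together in some member of the family. The join $G_1*G_2$ is obtained from $G_1+G_2$ by adding all edges between $V(G_1)$ and $V(G_2)$. *)

(* Defs.v *)
From mathcomp Require Import all_boot.
Set Implicit Arguments. Unset Strict Implicit. Unset Printing Implicit Defensive.

Definition simple_graph (T : finType) (e : rel T) : Prop :=
  symmetric e /\ irreflexive e.

Section Graphs.
Variable T : finType.
Variable e : rel T.

Definition is_clique (K : {set T}) : bool :=
  [forall x in K, forall y in K, (x != y) ==> e x y].

Definition is_stable (S : {set T}) : bool :=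
  [forall x in S, forall y in S, ~~ e x y].

Definition is_max_stable (S : {set T}) : bool := maxset is_stable S.

Definition is_strong_clique (K : {set T}) : bool :=
  is_clique K && [forall S : {set T}, is_max_stable S ==> (K :&: S != set0)].

Definition semi_weakly_CIS : Prop :=
  exists F : {set {set T}},
    (forall K, K \in F -> is_strong_clique K) /\
    (forall u v, e u v -> exists2 K, K \in F & (u \in K) && (v \in K)).
End Graphs.

Definition disj_union (T1 T2 : finType) (e1 : rel T1) (e2 : rel T2)
  : rel (T1 + T2)%type :=
  fun x y => match x, y with
             | inl a, inl b => e1 a b
             | inr a, inr b => e2 a b
             | _, _ => false
             end.

Definition graph_join (T1 T2 : finType) (e1 : rel T1) (e2 : rel T2)
  : rel (T1 + T2)%type :=
  fun x y => match x, y with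
             | inl a, inl b => e1 a b
             | inr a, inr b => e2 a b
             | _, _ => true
             end.

(* Main.v *)
Require Import Defs.
From mathcomp Require Import all_boot.
Set Implicit Arguments. Unset Strict Implicit. Unset Printing Implicit Defensive.

Lemma stableP (T : finType) (e : rel T) (S : {set T}) :
  reflect (forall x y, x \in S -> y \in S -> ~~ e x y) (is_stable e S).
Proof.
apply: (iffP forallP) => [H x y Hx Hy | H x].
- by move: (H x); rewrite Hx /= => /forallP/(_ y); rewrite Hy.
- by apply/implyP => Hx; apply/forallP => y; apply/implyP => Hy; apply: H.
Qed.

Lemma cliqueP (T : finType) (e : rel T) (K : {set T}) :
  reflect (forall x y, x \in K -> y \in K -> x != y -> e x y) (is_clique e K).
Proof.
apply: (iffP forallP) => [H x y Hx Hy | H x].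
- by move: (H x); rewrite Hx /= => /forallP/(_ y); rewrite Hy /= => /implyP.
- by apply/implyP => Hx; apply/forallP => y; apply/implyP => Hy; apply/implyP; apply: H.
Qed.

Lemma strongP (T : finType) (e : rel T) (K : {set T}) :
  reflect (is_clique e K /\ forall S, is_max_stable e S -> exists2 x, x \in K & x \in S)
          (is_strong_clique e K).
Proof.
apply: (iffP andP) => [[Hc /forallP H] | [Hc H]]; split => //.
- move=> S HS; move: (H S); rewrite HS /= => /set0Pn [x]; rewrite inE => /andP[? ?].
  by exists x.
- apply/forallP => S; apply/implyP => HS; apply/set0Pn.
  case: (H S HS) => x ? ?; exists x; by rewrite inE; apply/andP.
Qed.

Definition mk (T1 T2 : finType) (K1 : {set T1}) (K2 : {set T2}) : {set (T1 + T2)%type} :=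
  [set z | match z with inl a => a \in K1 | inr b => b \in K2 end].

Section S.
Variables (T1 T2 : finType) (e1 : rel T1) (e2 : rel T2).

Lemma union_pre_l (S : {set (T1+T2)%type}) : is_max_stable (disj_union e1 e2) S ->
  is_max_stable e1 [set a | inl a \in S].
Proof.
case/maxsetP => /stableP HS Hmax; apply/maxsetP; split.
- apply/stableP => x y; rewrite !inE => Hx Hy; exact: (HS _ _ Hx Hy).
- move=> B /stableP HB sub.
  pose S' : {set (T1 + T2)%type} :=
    [set z | match z with inl a => a \in B | inr b => inr b \in S end].
  have HS' : is_stable (disj_union e1 e2) S'.
    apply/stableP => [[a|a] [b|b]]; rewrite !inE //= => Ha Hb;
      by [apply: HB Ha Hb | apply: (HS _ _ Ha Hb)].
  have SS' : S \subset S'.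
    apply/subsetP => -[a|a] Ha; rewrite inE //=.
    by apply: (subsetP sub); rewrite inE.
  have E := Hmax S' HS' SS'.
  apply/eqP; rewrite eqEsubset sub andbT; apply/subsetP => a Ha.
  by rewrite inE -E inE.
Qed.

Lemma union_pre_r (S : {set (T1+T2)%type}) : is_max_stable (disj_union e1 e2) S ->
  is_max_stable e2 [set a | inr a \in S].
Proof.
case/maxsetP => /stableP HS Hmax; apply/maxsetP; split.
- apply/stableP => x y; rewrite !inE => Hx Hy; exact: (HS _ _ Hx Hy).
- move=> B /stableP HB sub.
  pose S' : {set (T1 + T2)%type} :=
    [set z | match z with inr a => a \in B | inl b => inl b \in S end].
  have HS' : is_stable (disj_union e1 e2) S'.
    apply/stableP => [[a|a] [b|b]]; rewrite !inE //= => Ha Hb;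
      by [apply: HB Ha Hb | apply: (HS _ _ Ha Hb)].
  have SS' : S \subset S'.
    apply/subsetP => -[a|a] Ha; rewrite inE //=.
    by apply: (subsetP sub); rewrite inE.
  have E := Hmax S' HS' SS'.
  apply/eqP; rewrite eqEsubset sub andbT; apply/subsetP => a Ha.
  by rewrite inE -E inE.
Qed.

Lemma join_pre_l (S : {set (T1+T2)%type}) : is_max_stable (graph_join e1 e2) S ->
  (forall b, inr b \notin S) ->
  is_max_stable e1 [set a | inl a \in S].
Proof.
move=> + Hno; case/maxsetP => /stableP HS Hmax; apply/maxsetP; split.
- apply/stableP => x y; rewrite !inE => Hx Hy; exact: (HS _ _ Hx Hy).
- move=> B /stableP HB sub.
  pose S' : {set (T1 + T2)%type} :=
    [set z | match z with inl a => a \in B | inr b => false end].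
  have HS' : is_stable (graph_join e1 e2) S'.
    apply/stableP => [[a|a] [b|b]]; rewrite !inE //= => Ha Hb; exact: HB Ha Hb.
  have SS' : S \subset S'.
    apply/subsetP => -[a|a] Ha; rewrite inE //=.
      by apply: (subsetP sub); rewrite inE.
    by move: (Hno a); rewrite Ha.
  have E := Hmax S' HS' SS'.
  apply/eqP; rewrite eqEsubset sub andbT; apply/subsetP => a Ha.
  by rewrite inE -E inE.
Qed.

Lemma join_pre_r (S : {set (T1+T2)%type}) : is_max_stable (graph_join e1 e2) S ->
  (forall b, inl b \notin S) ->
  is_max_stable e2 [set a | inr a \in S].
Proof.
move=> + Hno; case/maxsetP => /stableP HS Hmax; apply/maxsetP; split.
- apply/stableP => x y; rewrite !inE => Hx Hy; exact: (HS _ _ Hx Hy).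
- move=> B /stableP HB sub.
  pose S' : {set (T1 + T2)%type} :=
    [set z | match z with inr a => a \in B | inl b => false end].
  have HS' : is_stable (graph_join e1 e2) S'.
    apply/stableP => [[a|a] [b|b]]; rewrite !inE //= => Ha Hb; exact: HB Ha Hb.
  have SS' : S \subset S'.
    apply/subsetP => -[a|a] Ha; rewrite inE //=.
      by move: (Hno a); rewrite Ha.
    by apply: (subsetP sub); rewrite inE.
  have E := Hmax S' HS' SS'.
  apply/eqP; rewrite eqEsubset sub andbT; apply/subsetP => a Ha.
  by rewrite inE -E inE.
Qed.

Lemma union_strong_l (K1 : {set T1}) : is_strong_clique e1 K1 ->
  is_strong_clique (disj_union e1 e2) (mk K1 set0).
Proof.
case/strongP => /cliqueP Hc H; apply/strongP; split.
- apply/cliqueP => -[a|a] [b|b]; rewrite !inE //= => Ha Hb Hne.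
  by apply: Hc Ha Hb _; apply: contra Hne => /eqP->.
- move=> S /union_pre_l /H [x Hx1]; rewrite inE => Hx2.
  by exists (inl x); rewrite // inE.
Qed.

Lemma union_strong_r (K2 : {set T2}) : is_strong_clique e2 K2 ->
  is_strong_clique (disj_union e1 e2) (mk set0 K2).
Proof.
case/strongP => /cliqueP Hc H; apply/strongP; split.
- apply/cliqueP => -[a|a] [b|b]; rewrite !inE //= => Ha Hb Hne.
  by apply: Hc Ha Hb _; apply: contra Hne => /eqP->.
- move=> S /union_pre_r /H [x Hx1]; rewrite inE => Hx2.
  by exists (inr x); rewrite // inE.
Qed.

Lemma join_strong (K1 : {set T1}) (K2 : {set T2}) (w : (T1 + T2)%type) :
  is_clique e1 K1 -> is_clique e2 K2 ->
  (forall a : T1, is_strong_clique e1 K1) ->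
  (forall b : T2, is_strong_clique e2 K2) ->
  is_strong_clique (graph_join e1 e2) (mk K1 K2).
Proof.
move=> /cliqueP Hc1 /cliqueP Hc2 H1 H2; apply/strongP; split.
- apply/cliqueP => -[a|a] [b|b]; rewrite !inE //= => Ha Hb Hne.
    by apply: Hc1 Ha Hb _; apply: contra Hne => /eqP->.
  by apply: Hc2 Ha Hb _; apply: contra Hne => /eqP->.
- move=> S HSmax.
  have stab : forall a b, inl a \in S -> inr b \in S -> False.
    move: HSmax => /maxsetP [/stableP HS _] a b Ha Hb.
    by move: (HS _ _ Ha Hb).
  have useL : forall a : T1, (forall b : T2, inr b \notin S) -> exists2 x, x \in mk K1 K2 & x \in S.
    move=> a Hno; case/strongP: (H1 a) => _ /(_ _ (join_pre_l HSmax Hno)) [z Hz1].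
    by rewrite inE => Hz2; exists (inl z); rewrite // inE.
  have useR : forall b : T2, (forall a : T1, inl a \notin S) -> exists2 x, x \in mk K1 K2 & x \in S.
    move=> b Hno; case/strongP: (H2 b) => _ /(_ _ (join_pre_r HSmax Hno)) [z Hz1].
    by rewrite inE => Hz2; exists (inr z); rewrite // inE.
  case: w => [a|b].
  + case: (pickP [pred y | inr y \in S]) => [y Hy | Hno].
    * apply: (useR y) => x; apply/negP => Hx; exact: (stab _ _ Hx Hy).
    * by apply: (useL a) => b; move: (Hno b) => /= ->.
  + case: (pickP [pred y | inl y \in S]) => [y Hy | Hno].
    * apply: (useL y) => x; apply/negP => Hx; exact: (stab _ _ Hy Hx).
    * by apply: (useR b) => a; move: (Hno a) => /= ->.
Qed.
End S.

Lemma vertex_strong (T : finType) (e : rel T) : simple_graph e -> semi_weakly_CIS e ->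
  forall b, exists K, is_strong_clique e K && (b \in K).
Proof.
move=> [sym irr] [F [HF Hcov]] b.
case: (pickP (e b)) => [c Hbc | Hno].
- case: (Hcov _ _ Hbc) => K KF /andP[Hb _]; exists K; by rewrite HF.
- exists [set b]; rewrite set11 andbT; apply/strongP; split.
  + by apply/cliqueP => x y; rewrite !inE => /eqP-> /eqP->; rewrite eqxx.
  + move=> S /maxsetP[/stableP HS Hmax]; exists b; first by rewrite inE.
    case Hin: (b \in S) => //.
    have HS' : is_stable e (b |: S).
      apply/stableP => x y; rewrite !inE => /orP[/eqP->|Hx] /orP[/eqP->|Hy].
      * by rewrite irr.
      * by rewrite Hno.
      * by rewrite sym Hno.
      * exact: HS.
    have E := Hmax _ HS' (subsetUr _ _).
    by rewrite -E setU11 in Hin.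
Qed.

Lemma opt_strong (T : finType) (e : rel T) : simple_graph e -> semi_weakly_CIS e ->
  exists K, is_clique e K /\ forall b : T, is_strong_clique e K.
Proof.
move=> Hs Hw; case: (pickP (@predT T)) => [b _ | H].
- case: (vertex_strong Hs Hw b) => K /andP[HK _]; exists K; split => //.
  by case/andP: HK.
- exists set0; split; last by move=> b; have := H b.
  by apply/cliqueP => x y; rewrite inE.
Qed.

Lemma swc_of (T : finType) (e : rel T) :
  (forall u v, e u v -> exists K, [&& is_strong_clique e K, u \in K & v \in K]) ->
  semi_weakly_CIS e.
Proof.
move=> H; exists [set K | is_strong_clique e K]; split.
- by move=> K; rewrite inE.
- move=> u v /H [K /and3P[H1 H2 H3]]; exists K; rewrite ?inE //; exact/andP.
Qed.

Theorem proposition15 (T1 T2 : finType) (e1 : rel T1) (e2 : rel T2) :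
  simple_graph e1 -> simple_graph e2 ->
  semi_weakly_CIS e1 -> semi_weakly_CIS e2 ->
  semi_weakly_CIS (disj_union e1 e2) /\ semi_weakly_CIS (graph_join e1 e2).
Proof.
move=> Hs1 Hs2 Hw1 Hw2.
have cov1 : forall a b, e1 a b -> exists K, [&& is_strong_clique e1 K, a \in K & b \in K].
  case: Hw1 => F [HF Hc] a b /Hc [K KF /andP[? ?]]; exists K; apply/and3P; split => //; exact: HF.
have cov2 : forall a b, e2 a b -> exists K, [&& is_strong_clique e2 K, a \in K & b \in K].
  case: Hw2 => F [HF Hc] a b /Hc [K KF /andP[? ?]]; exists K; apply/and3P; split => //; exact: HF.
split; apply: swc_of.
- move=> [a|a] [b|b] //= Hab.
  + case: (cov1 _ _ Hab) => K /and3P[HK Ha Hb]; exists (mk K set0).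
    by rewrite union_strong_l // !inE Ha Hb.
  + case: (cov2 _ _ Hab) => K /and3P[HK Ha Hb]; exists (mk set0 K).
    by rewrite union_strong_r // !inE Ha Hb.
- move=> [a|a] [b|b] //= Hab.
  + case: (cov1 _ _ Hab) => K /and3P[HK Ha Hb].
    case: (opt_strong Hs2 Hw2) => K2 [Hc2 H2]; exists (mk K K2).
    rewrite (@join_strong _ _ _ _ _ _ (inl a)) // ?inE ?Ha ?Hb //.
    by case/andP: HK.
  + case: (vertex_strong Hs1 Hw1 a) => K /andP[HK Ha].
    case: (vertex_strong Hs2 Hw2 b) => K2 /andP[HK2 Hb]; exists (mk K K2).
    rewrite (@join_strong _ _ _ _ _ _ (inl a)) // ?inE ?Ha ?Hb //.
      by case/andP: HK.
    by case/andP: HK2.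
  + case: (vertex_strong Hs2 Hw2 a) => K2 /andP[HK2 Ha].
    case: (vertex_strong Hs1 Hw1 b) => K /andP[HK Hb]; exists (mk K K2).
    rewrite (@join_strong _ _ _ _ _ _ (inr a)) // ?inE ?Ha ?Hb //.
      by case/andP: HK.
    by case/andP: HK2.
  + case: (cov2 _ _ Hab) => K2 /and3P[HK2 Ha Hb].
    case: (opt_strong Hs1 Hw1) => K [Hc H1]; exists (mk K K2).
    rewrite (@join_strong _ _ _ _ _ _ (inr a)) // ?inE ?Ha ?Hb //.
    by case/andP: HK2.
Qed.
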